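(* Let $n\in\omega$ and let $\mathcal{M}$ be a structure with exactly $n$ elements. Then ${\rm ar}({\rm Th}(\mathcal{M}))\leq n$.
   Context: All theories are complete first-order theories. For $n\geq 1$, a formula $\varphi(\overline{x})$ of a theory $T$ is $n$-ary if it is $T$-equivalent to a Boolean combination of $T$-formulas each of which has at most $n$ free variables; for $n=0$, $\varphi(\overline{x})$ is $0$-ary if it is $T$-equivalent to a sentence. A theory $T$ is unary ($1$-ary) if every $T$-formula is $T$-equivalent to a Boolean combination of $T$-formulas with one free variable and formulas of the form $x\approx y$; for $n\geq 2$, $T$ is $n$-ary if every $T$-formula is $n$-ary. The arity ${\rm ar}(T)$ is the natural number $n$ such that $T$ is $n$-ary and not $(n-1)$-ary; if $T$ is $n$-ary for no $n$, ${\rm ar}(T)=\infty$. *)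

(* Defs.v *)
From mathcomp Require Import all_boot.
Set Implicit Arguments. Unset Strict Implicit. Unset Printing Implicit Defensive.

Record signature := Signature {
  fsym : Type; fari : fsym -> nat;
  rsym : Type; rari : rsym -> nat }.

Section Syntax.
Variable L : signature.

Inductive term : Type :=
| tvar : nat -> term
| tapp (f : fsym L) : ('I_(fari f) -> term) -> term.

Inductive form : Type :=
| Fal : form
| Eq : term -> term -> form
| Rel (r : rsym L) : ('I_(rari r) -> term) -> form
| Not : form -> form
| And : form -> form -> form
| Or : form -> form -> form
| Imp : form -> form -> form
| Ex : nat -> form -> form
| All : nat -> form -> form.

Fixpoint tfv (t : term) : seq nat :=
  match t with
  | tvar x => [:: x]
  | tapp f ts => flatten [seq tfv (ts i) | i <- enum 'I_(fari f)]
  end.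

Fixpoint ffv (p : form) : seq nat :=
  match p with
  | Fal => [::]
  | Eq t u => tfv t ++ tfv u
  | Rel r ts => flatten [seq tfv (ts i) | i <- enum 'I_(rari r)]
  | Not q => ffv q
  | And q s | Or q s | Imp q s => ffv q ++ ffv s
  | Ex x q | All x q => [seq y <- ffv q | y != x]
  end.

Definition sentence (p : form) : Prop := ffv p = [::].

Definition nfv (p : form) : nat := size (undup (ffv p)).

Definition Iff (p q : form) : form := And (Imp p q) (Imp q p).

Definition uclose (p : form) : form := foldr All p (undup (ffv p)).

Inductive boolcomb (B : form -> Prop) : form -> Prop :=
| bc_base p : B p -> boolcomb B p
| bc_not p : boolcomb B p -> boolcomb B (Not p)
| bc_and p q : boolcomb B p -> boolcomb B q -> boolcomb B (And p q)
| bc_or p q : boolcomb B p -> boolcomb B q -> boolcomb B (Or p q)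
| bc_imp p q : boolcomb B p -> boolcomb B q -> boolcomb B (Imp p q).

Definition theory := form -> Prop.

(* T-equivalence: T contains (so proves) the universal closure of p <-> q *)
Definition T_equiv (T : theory) (p q : form) : Prop := T (uclose (Iff p q)).

Definition formula_nary (T : theory) (n : nat) (p : form) : Prop :=
  if n is 0 then exists s, sentence s /\ T_equiv T p s
  else exists q, boolcomb (fun c => nfv c <= n) q /\ T_equiv T p q.

(* n-ary theories; for n = 1 the special "unary" definition;
   for n = 0: every formula is 0-ary *)
Definition theory_nary (T : theory) (n : nat) : Prop :=
  match n with
  | 1 => forall p, exists q,
           boolcomb (fun c => nfv c <= 1 \/ exists x y, c = Eq (tvar x) (tvar y)) q
           /\ T_equiv T p q
  | _ => forall p, formula_nary T n p
  end.

(* ar(T) = n : T is n-ary and not (n-1)-ary *)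
Definition is_arity (T : theory) (n : nat) : Prop :=
  theory_nary T n /\ (forall m, n = m.+1 -> ~ theory_nary T m).

End Syntax.

Record structure (L : signature) := Structure {
  carrier :> Type;
  finterp : forall f : fsym L, ('I_(fari f) -> carrier) -> carrier;
  rinterp : forall r : rsym L, ('I_(rari r) -> carrier) -> Prop }.

Section Semantics.
Variables (L : signature) (M : structure L).

Definition upd (env : nat -> M) (x : nat) (a : M) : nat -> M :=
  fun y => if y == x then a else env y.

Fixpoint teval (env : nat -> M) (t : term L) : M :=
  match t with
  | tvar x => env x
  | tapp f ts => @finterp L M f (fun i => teval env (ts i))
  end.

Fixpoint holds (env : nat -> M) (p : form L) : Prop :=
  match p with
  | Fal => False
  | Eq t u => teval env t = teval env u
  | Rel r ts => @rinterp L M r (fun i => teval env (ts i))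
  | Not q => ~ holds env q
  | And q s => holds env q /\ holds env s
  | Or q s => holds env q \/ holds env s
  | Imp q s => holds env q -> holds env s
  | Ex x q => exists a, holds (upd env x a) q
  | All x q => forall a, holds (upd env x a) q
  end.

Definition Th : theory L := fun s => sentence s /\ forall env, holds env s.

End Semantics.

(* Main.v *)
From Stdlib Require Import Classical FunctionalExtensionality.
Require Import Defs.
From mathcomp Require Import all_boot.

Section Aux.
Variable L : signature.
Variable M : structure L.

Definition sem_eq (p q : form L) := forall env : nat -> M, holds env p <-> holds env q.

Lemma ffv_foldr (p : form L) xs y :
  y \in ffv (foldr (@All L) p xs) -> (y \in ffv p) && (y \notin xs).
Proof.
elim: xs => [|x xs IH] /=; first by move=> ->.
rewrite mem_filter in_cons => /andP[yx /IH /andP[-> yxs]].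
by rewrite (negbTE yx).
Qed.

Lemma sentence_uclose (p : form L) : sentence (uclose p).
Proof.
rewrite /sentence /uclose.
case E: (ffv (foldr (@All L) p (undup (ffv p)))) => [|y s] //.
have : y \in ffv (foldr (@All L) p (undup (ffv p))) by rewrite E in_cons eqxx.
by move/ffv_foldr; rewrite mem_undup => /andP[->].
Qed.

Lemma holds_foldr (p : form L) xs :
  (forall env : nat -> M, holds env p) -> forall env : nat -> M, holds env (foldr (@All L) p xs).
Proof. by elim: xs => [|x xs IH] //= H env a; apply: IH. Qed.

Lemma sem_Tequiv (p q : form L) : sem_eq p q -> T_equiv (Th M) p q.
Proof.
move=> H; split; first exact: sentence_uclose.
apply: holds_foldr => env /=; split => h; by apply/H.
Qed.

Lemma bc_mono (B B' : form L -> Prop) q :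
  (forall c, B c -> B' c) -> boolcomb B q -> boolcomb B' q.
Proof.
move=> HB; elim => *; [apply: bc_base; auto | exact: bc_not | exact: bc_and
  | exact: bc_or | exact: bc_imp].
Qed.

Definition Bn n (c : form L) := nfv c <= n \/ exists x y, c = Eq (tvar L x) (tvar L y).

Lemma bigOr n (A : eqType) (l : seq A) (P : A -> (nat -> M) -> Prop) :
  (forall a, a \in l -> exists q, boolcomb (Bn n) q /\
      forall env, holds env q <-> P a env) ->
  exists Q, boolcomb (Bn n) Q /\ forall env, holds env Q <-> exists a, a \in l /\ P a env.
Proof.
elim: l => [|a l IH] H.
  exists (Fal L); split; first by apply: bc_base; left.
  by move=> env; split => //= [[a []]].
have [Q [bQ hQ]] : exists Q, boolcomb (Bn n) Q /\
  forall env, holds env Q <-> exists a, a \in l /\ P a env.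
  by apply: IH => b bl; apply: H; rewrite in_cons bl orbT.
have [q [bq hq]] := H a (mem_head _ _).
exists (Or q Q); split; first exact: bc_or.
move=> env /=; split.
  case=> [/hq h | /hQ [b [bl h]]]; first by exists a; rewrite mem_head.
  by exists b; rewrite in_cons bl orbT.
case=> b []; rewrite in_cons => /orP[/eqP -> h | bl h]; first by left; apply/hq.
by right; apply/hQ; exists b.
Qed.

Lemma upd_same (env : nat -> M) y : upd env y (env y) = env.
Proof. by apply: functional_extensionality => z; rewrite /upd; case: eqP => [->|]. Qed.

Lemma main_lemma n (e : 'I_n -> M) (g : M -> 'I_n) (eK : cancel g e) :
  forall k (p : form L), nfv p < k -> exists q, boolcomb (Bn n) q /\ sem_eq p q.
Proof.
elim=> [|k IH] p //; rewrite ltnS => hk.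
case: (leqP (nfv p) n) => hn.
  by exists p; split => //; apply: bc_base; left.
set vs := undup (ffv p).
set l := [seq xy <- [seq (x, y) | x <- vs, y <- vs] | xy.1 != xy.2].
case: (@bigOr n _ l
  (fun xy env => env xy.1 = env xy.2 /\ holds env p)) => [|Q [bQ hQ]].
  case=> x y; rewrite mem_filter /= => /andP[xy].
  case/allpairsP => [[x' y'] /= [xv yv [ex ey]]]; subst x' y'.
  set psi := Ex y (And (Eq (tvar L y) (tvar L x)) p).
  have hpsi : nfv psi < nfv p.
    rewrite /nfv.
    have yin : y \in vs by [].
    have sub : {subset undup (ffv psi) <= rem y vs}.
      move=> z; rewrite mem_undup /= eqxx xy (mem_rem_uniq _ (undup_uniq _)) in_cons mem_filter.
      rewrite inE => /orP[/eqP ->|/andP[zy zp]]; first by rewrite xy.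
      by rewrite zy /vs mem_undup.
    have := uniq_leq_size (undup_uniq _) sub.
    rewrite size_rem // => h; apply: (leq_ltn_trans h).
    by rewrite ltn_predL (leq_ltn_trans (leq0n n) hn).
  have [q [bq hq]] := IH psi (leq_trans hpsi hk).
  exists (And (Eq (tvar L x) (tvar L y)) q); split.
    by apply: bc_and => //; apply: bc_base; right; exists x, y.
  move=> env /=; rewrite -hq /psi /=; split.
    case=> exy [a [ha hp]]; split => //.
    move: ha hp; rewrite /upd eqxx (negbTE xy) => ->.
    by change (holds (upd env y (env x)) p -> holds env p); rewrite exy upd_same.
  case=> exy hp; split => //; exists (env y).
  split; first by rewrite /upd eqxx (negbTE xy).
  by rewrite upd_same.
exists Q; split; first exact: bQ.
move=> env; rewrite hQ; split; last by case=> [[x y] [_ [_ ?]]].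
move=> hp.
apply: NNPP => hno.
have inj : {in vs &, injective (fun x => g (env x))}.
  move=> x y xv yv /= hg.
  have exy : env x = env y by rewrite -(eK (env x)) hg eK.
  apply: NNPP => nxy; apply: hno; exists (x, y); split => //.
  rewrite mem_filter /=; apply/andP; split; first by apply/eqP.
  by apply/allpairsP; exists (x, y).
have := map_inj_in_uniq inj; rewrite undup_uniq => /card_uniqP.
rewrite size_map => hc.
have := max_card (mem [seq g (env x) | x <- vs]); rewrite hc card_ord.
by rewrite leqNgt hn.
Qed.

End Aux.

Lemma minimize (L : signature) (T : theory L) m :
  theory_nary T m -> exists k, is_arity T k /\ k <= m.
Proof.
elim: m => [|m IH] H.
  by exists 0; split => //; split => // m' [].
case: (classic (theory_nary T m)) => [/IH [k [hk km]]|hn].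
  by exists k; split => //; apply: leq_trans km _.
by exists m.+1; split => //; split => // m' [<-].
Qed.

Theorem proposition1p4 (L : signature) (M : structure L) (n : nat)
  (HM : exists e : 'I_n -> carrier M, bijective e) :
  exists k, is_arity (Th M) k /\ k <= n.
Proof.
case: HM => e [g ge eg].
case: n e g ge eg => [|[|n]] e g ge eg.
- apply: minimize => /= p; exists (Fal L); split => //.
  apply: sem_Tequiv => env; case: (g (env 0)) => //.
- apply: minimize => /= p.
  have [q [bq hq]] := @main_lemma L M _ e g eg _ _ (ltnSn (nfv p)).
  by exists q; split => //; apply: sem_Tequiv.
- apply: minimize => /= p.
  have [q [bq hq]] := @main_lemma L M _ e g eg _ _ (ltnSn (nfv p)).
  exists q; split; last by apply: sem_Tequiv.
  apply: bc_mono bq => c [//|[x [y ->]]].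
  by rewrite /nfv /=; case: ifP.
Qed.
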